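(* Let $m\in\mathbb{N}$ and let $L,M,N$ be nonempty subsets of $[m]$. Let $D=(1+u^2)D_1+u^2\big(D_2+(u+u^2)D_3\big)\subseteq\mathcal{R}^m$ where $D_1\in\{\Delta_L,\Delta_L^c\}$, $D_2\in\{\Delta_M,\Delta_M^c\}$, $D_3\in\{\Delta_N,\Delta_N^c\}$. Then the binary linear code $\Phi(C_D)$ is self-orthogonal (with respect to the Euclidean inner product on $\mathbb{Z}_2^{3|D|}$).
   Context: $\mathcal{R}=\mathbb{Z}_2[u]/\langle u^3-u\rangle$; every $x\in\mathcal{R}^n$ is uniquely $x=r+us+u^2t$ with $r,s,t\in\mathbb{Z}_2^n$, and $\mathbb{Z}_2^n\subseteq\mathcal{R}^n$. The Gray map $\Phi:\mathcal{R}^n\to\mathbb{Z}_2^{3n}$ is $\Phi(r+us+u^2t)=(r+s,\,s+t,\,t)$. $[m]=\{1,\dots,m\}$; for $X\subseteq[m]$, $\Delta_X=\{v\in\mathbb{Z}_2^m:\mathrm{Supp}(v)\subseteq X\}$ and $\Delta_X^c=\mathbb{Z}_2^m\setminus\Delta_X$. For $D_1,D_2,D_3\subseteq\mathbb{Z}_2^m$, $(1+u^2)D_1+u^2(D_2+(u+u^2)D_3)=\{(1+u^2)t_1+u^2t_2+u^2(u+u^2)t_3:t_i\in D_i\}\subseteq\mathcal{R}^m$. Given $D=\{d_1,\dots,d_n\}\subseteq\mathcal{R}^m$ (in a fixed order), $C_D=\{(v\cdot d_1,\dots,v\cdot d_n):v\in\mathcal{R}^m\}$ with $v\cdot d=\sum_i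 v_id_i$, and $\Phi(C_D)=\{\Phi(c):c\in C_D\}\subseteq\mathbb{Z}_2^{3n}$. A binary code $C$ is self-orthogonal if $C\subseteq C^\perp$. *)

(* Defs.v *)
From mathcomp Require Import all_boot all_order all_algebra.
Set Implicit Arguments.
Unset Strict Implicit.
Unset Printing Implicit Defensive.
Import GRing.Theory.
Local Open Scope ring_scope.

(* The ring R = Z_2[u]/<u^3 - u>.  An element r + u s + u^2 t (r,s,t in Z_2)
   is represented by the triple (r, s, t). *)
Definition Rel : Type := ('F_2 * 'F_2 * 'F_2)%type.

Definition rr (x : Rel) : 'F_2 := x.1.1.
Definition rs (x : Rel) : 'F_2 := x.1.2.
Definition rt (x : Rel) : 'F_2 := x.2.

Definition rzero : Rel := (0, 0, 0).
Definition radd (x y : Rel) : Rel := (rr x + rr y, rs x + rs y, rt x + rt y).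
(* (a0 + a1 u + a2 u^2)(b0 + b1 u + b2 u^2) using u^3 = u, u^4 = u^2 *)
Definition rmul (x y : Rel) : Rel :=
  (rr x * rr y,
   rr x * rs y + rs x * rr y + rs x * rt y + rt x * rs y,
   rr x * rt y + rt x * rr y + rs x * rs y + rt x * rt y).

Definition R_one_plus_u2 : Rel := (1, 0, 1).
Definition R_u2 : Rel := (0, 0, 1).
Definition R_u_plus_u2 : Rel := (0, 1, 1).

Definition bvec (m : nat) := {ffun 'I_m -> 'F_2}.
Definition rvec (m : nat) := {ffun 'I_m -> Rel}.

Definition inj_bvec m (v : bvec m) : rvec m := [ffun i => (v i, 0, 0)].
Definition rvadd m (v w : rvec m) : rvec m := [ffun i => radd (v i) (w i)].
Definition rvscale m (a : Rel) (v : rvec m) : rvec m := [ffun i => rmul a (v i)].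

Definition Delta m (X : {set 'I_m}) : {set bvec m} :=
  [set v : bvec m | [forall i, (v i != 0) ==> (i \in X)]].
Definition Deltac m (X : {set 'I_m}) : {set bvec m} := ~: Delta X.

(* (1+u^2) D1 + u^2 (D2 + (u+u^2) D3) *)
Definition Dset m (D1 D2 D3 : {set bvec m}) : {set rvec m} :=
  [set rvadd (rvscale R_one_plus_u2 (inj_bvec t.1.1))
             (rvscale R_u2 (rvadd (inj_bvec t.1.2)
                                  (rvscale R_u_plus_u2 (inj_bvec t.2))))
  | t in setX (setX D1 D2) D3].

Definition rdot m (v d : rvec m) : Rel := \big[radd/rzero]_(i < m) rmul (v i) (d i).

(* the codeword of C_D associated with v, D enumerated in a fixed order *)
Definition CD_word m (D : {set rvec m}) (v : rvec m) : seq Rel :=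
  [seq rdot v d | d <- enum D].

Definition Phi (c : seq Rel) : seq 'F_2 :=
  [seq rr x + rs x | x <- c] ++ [seq rs x + rt x | x <- c] ++ [seq rt x | x <- c].

Definition PhiCD m (D : {set rvec m}) (w : seq 'F_2) : Prop :=
  exists v : rvec m, w = Phi (CD_word D v).

Definition bdot (x y : seq 'F_2) : 'F_2 := \sum_(p <- zip x y) p.1 * p.2.

Definition dual_code (n : nat) (C : seq 'F_2 -> Prop) (y : seq 'F_2) : Prop :=
  size y = n /\ forall x, C x -> bdot x y = 0.

Definition self_orthogonal (n : nat) (C : seq 'F_2 -> Prop) : Prop :=
  forall x, C x -> dual_code n C x.

(* Main.v *)
Require Import Defs.
From mathcomp Require Import all_boot all_order all_algebra.
From mathcomp Require Import ring.
Import GRing.Theory.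
Local Open Scope ring_scope.

Lemma F2_two : (2%:R : 'F_2) = 0. Proof. by apply/eqP. Qed.
Lemma F2_addxx (x : 'F_2) : x + x = 0.
Proof. by rewrite -mulr2n -mulr_natr F2_two mulr0. Qed.
Lemma F2_even (x : 'F_2) k : x *+ (2 * k)%N = 0.
Proof. by rewrite mulrnA mulr2n F2_addxx mul0rn. Qed.

Lemma F2_cases (x : 'F_2) : x = 0 \/ x = 1.
Proof. case: x => [[|[|n]] Hn]; [left|right|]; try by apply: val_inj. by []. Qed.

Lemma even_card m (X : {set 'I_m}) (D : {set bvec m}) :
  X != set0 -> (D = Delta X \/ D = Deltac X) -> forall x : 'F_2, x *+ #|D| = 0.
Proof.
move=> /set0Pn [i iX] hD.
pose fl (v : bvec m) : bvec m := [ffun j => v j + (j == i)%:R].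
have flK : involutive fl.
  by move=> v; apply/ffunP => j; rewrite /fl !ffunE -addrA F2_addxx addr0.
have flinj : injective fl := inv_inj flK.
have flD : forall v, (fl v \in D) = (v \in D).
  have flD0 : forall v, (fl v \in Delta X) = (v \in Delta X).
    suff H : forall v, v \in Delta X -> fl v \in Delta X.
      by move=> v; apply/idP/idP => [/H|/H//]; rewrite flK.
    move=> v; rewrite !inE => /forallP H; apply/forallP => j; apply/implyP.
    rewrite /fl ffunE; case: (eqVneq j i) => [->|ne] // .
    by rewrite addr0 => vj; move: (H j) => /implyP; apply.
  move=> v; case: hD => ->; first by [].
  by rewrite /Deltac !in_setC flD0.
pose B : {pred bvec m} := fun v => v i == 0.
have flB : forall v, (fl v \in B) = (v \notin B).
  move=> v; rewrite -!topredE /= /B /fl ffunE eqxx.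
  by case: (F2_cases (v i)) => ->.
have le1 : forall (P Q : {pred bvec m}), (forall v, v \in P -> fl v \in Q) -> (#|P| <= #|Q|)%N.
  move=> P Q H; rewrite -(card_imset P flinj); apply: subset_leq_card.
  by apply/subsetP => y /imsetP [x xP ->]; apply: H.
have E : (#|[predI D & B]| = #|[predD D & B]|)%N.
  apply/eqP; rewrite eqn_leq; apply/andP; split; apply: le1 => v;
  rewrite !inE /= flD flB ?negbK //.
  by case/andP => -> ->.
  by case/andP => -> ->.
move=> x; rewrite -(cardID B D) E addnn -mul2n; exact: F2_even.
Qed.

Definition mk {m} (t : bvec m * bvec m * bvec m) : rvec m :=
  rvadd (rvscale R_one_plus_u2 (inj_bvec t.1.1))
        (rvscale R_u2 (rvadd (inj_bvec t.1.2) (rvscale R_u_plus_u2 (inj_bvec t.2)))).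

Lemma DsetE m (D1 D2 D3 : {set bvec m}) : Dset D1 D2 D3 = mk @: setX (setX D1 D2) D3.
Proof. by []. Qed.

Lemma mkE m (t : bvec m * bvec m * bvec m) i :
  mk t i = (t.1.1 i, t.2 i, t.1.1 i + t.1.2 i + t.2 i).
Proof.
rewrite /mk /rvadd /rvscale /inj_bvec !ffunE /radd /rmul /rr /rs /rt /=.
congr (_, _, _); ring.
Qed.

Lemma mk_inj m : injective (@mk m).
Proof.
move=> [[a b] c] [[a' b'] c'] E.
have H : forall i, [/\ a i = a' i, c i = c' i & b i = b' i].
  move=> i; have Ei := congr1 (fun f : rvec m => f i) E; rewrite !mkE in Ei.
  have ha' : a i = a' i := congr1 (fun x => x.1.1) Ei.
  have hc' : c i = c' i := congr1 (fun x => x.1.2) Ei.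
  have hb' : a i + b i + c i = a' i + b' i + c' i := congr1 (fun x => x.2) Ei.
  split => //; rewrite ha' hc' in hb'.
  by apply: (addrI (a' i)); apply: (addIr (c' i)).
by congr (_, _, _); apply/ffunP => i; case: (H i).
Qed.

Lemma rr_sum (I : Type) (r : seq I) (P : pred I) (F : I -> Rel) :
  rr (\big[radd/rzero]_(i <- r | P i) F i) = \sum_(i <- r | P i) rr (F i).
Proof. by apply: (big_morph rr). Qed.
Lemma rs_sum (I : Type) (r : seq I) (P : pred I) (F : I -> Rel) :
  rs (\big[radd/rzero]_(i <- r | P i) F i) = \sum_(i <- r | P i) rs (F i).
Proof. by apply: (big_morph rs). Qed.
Lemma rt_sum (I : Type) (r : seq I) (P : pred I) (F : I -> Rel) :
  rt (\big[radd/rzero]_(i <- r | P i) F i) = \sum_(i <- r | P i) rt (F i).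
Proof. by apply: (big_morph rt). Qed.

Definition lin {m} (f : bvec m -> bvec m -> bvec m -> 'F_2) :=
  (forall a b c, f a b c = f a 0 0 + f 0 b 0 + f 0 0 c) /\ f 0 0 0 = 0.
Definition Q3 {m} (h : bvec m -> bvec m -> bvec m -> 'F_2) :=
  forall a b c, h a b c = h a b 0 + h a 0 c + h 0 b c + h a 0 0 + h 0 b 0 + h 0 0 c + h 0 0 0.

Lemma id7 (x1 x2 x3 y1 y2 y3 : 'F_2) :
  (x1 + x2 + x3) * (y1 + y2 + y3) =
  (x1 + x2 + 0) * (y1 + y2 + 0) + (x1 + 0 + x3) * (y1 + 0 + y3)
  + (0 + x2 + x3) * (0 + y2 + y3) + x1 * y1 + x2 * y2 + x3 * y3 + 0 * 0.
Proof.
have -> : (x1 + x2 + x3) * (y1 + y2 + y3) =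
  (x1 + x2 + 0) * (y1 + y2 + 0) + (x1 + 0 + x3) * (y1 + 0 + y3)
  + (0 + x2 + x3) * (0 + y2 + y3) + x1 * y1 + x2 * y2 + x3 * y3 + 0 * 0
  - 2%:R * (x1 * y1 + x2 * y2 + x3 * y3) by ring.
by rewrite F2_two !mul0r subr0.
Qed.

Lemma Q3M m (f g : bvec m -> bvec m -> bvec m -> 'F_2) :
  lin f -> lin g -> Q3 (fun a b c => f a b c * g a b c).
Proof.
move=> [Lf f0] [Lg g0] a b c /=.
rewrite (Lf a b c) (Lf a b 0) (Lf a 0 c) (Lf 0 b c) (Lg a b c) (Lg a b 0) (Lg a 0 c) (Lg 0 b c) f0 g0.
exact: id7.
Qed.

Lemma Q3D m (h1 h2 : bvec m -> bvec m -> bvec m -> 'F_2) :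
  Q3 h1 -> Q3 h2 -> Q3 (fun a b c => h1 a b c + h2 a b c).
Proof. move=> H1 H2 a b c /=; rewrite (H1 a b c) (H2 a b c); ring. Qed.

Lemma linD m (f g : bvec m -> bvec m -> bvec m -> 'F_2) :
  lin f -> lin g -> lin (fun a b c => f a b c + g a b c).
Proof.
move=> [Lf f0] [Lg g0]; split => [a b c|] /=; last by rewrite f0 g0 addr0.
rewrite (Lf a b c) (Lg a b c); ring.
Qed.

Lemma lin_ext m (f g : bvec m -> bvec m -> bvec m -> 'F_2) :
  (forall a b c, f a b c = g a b c) -> lin g -> lin f.
Proof. by move=> E [L0 L1]; split => [a b c|]; rewrite !E. Qed.

Lemma lin_sumG m (G : 'I_m -> 'F_2 -> 'F_2 -> 'F_2 -> 'F_2) :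
  (forall i x y z, G i x y z = G i x 0 0 + G i 0 y 0 + G i 0 0 z) ->
  (forall i, G i 0 0 0 = 0) ->
  lin (fun a b c => \sum_i G i (a i) (b i) (c i)).
Proof.
move=> HG H0; split => [a b c|] /=.
  rewrite -!big_split /=; apply: eq_bigr => i _; by rewrite !ffunE -HG.
by rewrite big1 // => i _; rewrite !ffunE H0.
Qed.

Definition cr {m} (v : rvec m) (a b c : bvec m) := rr (rdot v (mk (a, b, c))).
Definition cs {m} (v : rvec m) (a b c : bvec m) := rs (rdot v (mk (a, b, c))).
Definition ct {m} (v : rvec m) (a b c : bvec m) := rt (rdot v (mk (a, b, c))).

Lemma lin_cr m (v : rvec m) : lin (cr v).
Proof.
apply: (@lin_ext m _ (fun a b c => \sum_i rr (rmul (v i) (a i, c i, a i + b i + c i)))).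
  by move=> a b c; rewrite /cr /rdot rr_sum; apply: eq_bigr => i _; rewrite mkE.
apply: (@lin_sumG m (fun i x y z => rr (rmul (v i) (x, z, x + y + z)))) => [i x y z|i];
  rewrite /rmul /rr /rs /rt; cbn [fst snd]; ring.
Qed.
Lemma lin_cs m (v : rvec m) : lin (cs v).
Proof.
apply: (@lin_ext m _ (fun a b c => \sum_i rs (rmul (v i) (a i, c i, a i + b i + c i)))).
  by move=> a b c; rewrite /cs /rdot rs_sum; apply: eq_bigr => i _; rewrite mkE.
apply: (@lin_sumG m (fun i x y z => rs (rmul (v i) (x, z, x + y + z)))) => [i x y z|i];
  rewrite /rmul /rr /rs /rt; cbn [fst snd]; ring.
Qed.
Lemma lin_ct m (v : rvec m) : lin (ct v).
Proof.
apply: (@lin_ext m _ (fun a b c => \sum_i rt (rmul (v i) (a i, c i, a i + b i + c i)))).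
  by move=> a b c; rewrite /ct /rdot rt_sum; apply: eq_bigr => i _; rewrite mkE.
apply: (@lin_sumG m (fun i x y z => rt (rmul (v i) (x, z, x + y + z)))) => [i x y z|i];
  rewrite /rmul /rr /rs /rt; cbn [fst snd]; ring.
Qed.

Lemma sum_setX (T1 T2 : finType) (A : {set T1}) (B : {set T2}) (F : T1 * T2 -> 'F_2) :
  \sum_(t in setX A B) F t = \sum_(a in A) \sum_(b in B) F (a, b).
Proof. rewrite pair_big; apply: eq_big => [[a b]|[a b] _] //=; by rewrite in_setX. Qed.

Lemma sum3_Q3 m (h : bvec m -> bvec m -> bvec m -> 'F_2) (A B C : {set bvec m}) :
  Q3 h -> (forall x : 'F_2, x *+ #|A| = 0) -> (forall x : 'F_2, x *+ #|B| = 0) ->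
  (forall x : 'F_2, x *+ #|C| = 0) ->
  \sum_(a in A) \sum_(b in B) \sum_(c in C) h a b c = 0.
Proof.
move=> Hh eA eB eC.
pose P a b := h a b 0 + h a 0 0 + h 0 b 0 + h 0 0 0.
pose Q a c := h a 0 c + h 0 0 c.
pose S b c := h 0 b c.
have E : forall a b c, h a b c = P a b + Q a c + S b c.
  by move=> a b c; rewrite Hh /P /Q /S; ring.
transitivity (\sum_(a in A) \sum_(b in B) \sum_(c in C) P a b
  + \sum_(a in A) \sum_(b in B) \sum_(c in C) Q a c
  + \sum_(a in A) \sum_(b in B) \sum_(c in C) S b c).
  rewrite -!big_split; apply: eq_bigr => a _; rewrite -!big_split.
  apply: eq_bigr => b _; rewrite -!big_split; apply: eq_bigr => c _; exact: E.
have z1 : \sum_(a in A) \sum_(b in B) \sum_(c in C) P a b = 0.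
  by apply: big1 => a _; apply: big1 => b _; rewrite sumr_const eC.
have z2 : \sum_(a in A) \sum_(b in B) \sum_(c in C) Q a c = 0.
  by apply: big1 => a _; rewrite sumr_const eB.
have z3 : \sum_(a in A) \sum_(b in B) \sum_(c in C) S b c = 0.
  by rewrite sumr_const eA.
by rewrite z1 z2 z3 !addr0.
Qed.

Theorem proposition4p3 (m : nat) (L M N : {set 'I_m})
  (hL : L != set0) (hM : M != set0) (hN : N != set0)
  (D1 D2 D3 : {set bvec m})
  (h1 : D1 = Delta L \/ D1 = Deltac L)
  (h2 : D2 = Delta M \/ D2 = Deltac M)
  (h3 : D3 = Delta N \/ D3 = Deltac N) :
  self_orthogonal (3 * #|Dset D1 D2 D3|) (PhiCD (Dset D1 D2 D3)).
Proof.
move=> x [v ->]; split.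
  by rewrite /Phi /CD_word !size_cat !size_map -cardE !mulSn mul0n addn0.
move=> y [w ->].
rewrite /bdot /Phi /CD_word.
rewrite zip_cat ?size_map // zip_cat ?size_map //.
rewrite !big_cat -!map_comp !zip_map !big_map !big_enum /= addrA -!big_split /=.
rewrite DsetE big_imset; last by move=> ? ? _ _; apply: mk_inj.
rewrite sum_setX sum_setX.
pose hf a b c := (cr w a b c + cs w a b c) * (cr v a b c + cs v a b c)
  + (cs w a b c + ct w a b c) * (cs v a b c + ct v a b c) + ct w a b c * ct v a b c.
change (\sum_(a in D1) \sum_(b in D2) \sum_(c in D3) hf a b c = 0).
apply: (@sum3_Q3 m hf).
- apply: Q3D; [apply: Q3D|]; apply: Q3M;
  repeat apply: linD; (apply: lin_cr || apply: lin_cs || apply: lin_ct).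
- exact: even_card hL h1.
- exact: even_card hM h2.
- exact: even_card hN h3.
Qed.
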